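(* Let $n\ge0$ and $l\ge0$. In $H^*(\operatorname{Gr}_2(\mathbb{R}^\infty);\mathbb{Z}/2)=\mathbb{Z}/2[w_1,w_2]$, $$Q_n(w_1\bar w_{2l}) = w_1\bar w_{2^{n+1}-1+2l}.$$
   Context: $w_1,w_2$ are the Stiefel–Whitney classes of the tautological $2$-plane bundle; $\bar w_k$ are defined by $(1+w_1+w_2)(1+\bar w_1+\bar w_2+\cdots)=1$, with $\bar w_0=1$. $Q_n$ is the Milnor primitive: $Q_0=Sq^1$, $Q_n=[Q_{n-1},Sq^{2^n}]$. *)

(* Defs.v *)
From HB Require Import structures.
From mathcomp Require Import all_boot all_order all_algebra.
From mathcomp Require Import mpoly.
Set Implicit Arguments. Unset Strict Implicit. Unset Printing Implicit Defensive.
Import GRing.Theory.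
Local Open Scope ring_scope.

(* H^*(Gr_2(R^oo); Z/2) = Z/2[w1, w2], with w1 = 'X_0 (degree 1), w2 = 'X_1 (degree 2). *)
Definition HGr := {mpoly 'F_2[2]}.
Definition w1 : HGr := 'X_ord0.
Definition w2 : HGr := 'X_ord_max.

Definition wdeg (m : 'X_{1..2}) : nat := (m ord0 + 2 * m ord_max)%N.

Definition wcomp (d : nat) (q : HGr) : HGr :=
  \sum_(m <- msupp q | wdeg m == d) q@_m *: 'X_[m].

(* total Steenrod square, the ring map determined by the Wu formulas
   Sq(w1) = w1 + w1^2,  Sq(w2) = w2 + w1 w2 + w2^2 *)
Definition totalSq (q : HGr) : HGr :=
  comp_mpoly [tuple w1 + w1 ^+ 2; w2 + w1 * w2 + w2 ^+ 2] q.

Definition Sq (i : nat) (p : HGr) : HGr :=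
  \sum_(m <- msupp p) p@_m *: wcomp (wdeg m + i) (totalSq 'X_[m]).

Fixpoint Q (n : nat) (p : HGr) : HGr :=
  match n with
  | 0 => Sq 1 p
  | n'.+1 => Q n' (Sq (2 ^ n'.+1) p) - Sq (2 ^ n'.+1) (Q n' p)
  end.

(* dual classes: (1 + w1 + w2)(1 + wbar_1 + wbar_2 + ...) = 1, i.e.
   wbar_0 = 1 and wbar_k + w1 wbar_{k-1} + w2 wbar_{k-2} = 0 (k >= 1, wbar_{-1} = 0). *)
Fixpoint wbar_pair (k : nat) : HGr * HGr :=
  match k with
  | 0 => (1, - w1)
  | k'.+1 => let: (a, b) := wbar_pair k' in (b, - (w1 * b + w2 * a))
  end.
Definition wbar (k : nat) : HGr := (wbar_pair k).1.

(* Main.v *)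
Require Import Defs.
From HB Require Import structures.
From mathcomp Require Import all_boot all_order all_algebra.
From mathcomp Require Import mpoly ssrcomplements bigenough ring zify.
Set Implicit Arguments. Unset Strict Implicit. Unset Printing Implicit Defensive.
Import GRing.Theory BigEnough.
Lemma bin_even_odd a : forall c,
  odd 'C(a.*2, c.*2) = odd 'C(a, c) /\ odd 'C(a.*2, (c.*2).+1) = false.
Proof.
elim: a => [|a IH] c.
  by case: c.
case: c => [|c].
  split; first by rewrite !bin0.
  by rewrite bin1 odd_double.
have e1 : (a.+1).*2 = (a.*2).+2 by rewrite doubleS.
have e2 : (c.+1).*2 = (c.*2).+2 by rewrite doubleS.
rewrite e1 e2 !binS.
have [h1 h2] := IH c; have [h3 h4] := IH c.+1.
rewrite e2 in h3 h4.
split.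
- rewrite !oddD h1 h2 h3 /=.
  by case: (odd 'C(a, c.+1)); case: (odd 'C(a, c)).
- rewrite !oddD h2 h4 h3.
  by case: (odd 'C(a, c.+1)).
Qed.

Lemma bin_half a c : odd 'C(a, c.*2) = odd 'C(a./2, c).
Proof.
rewrite -[in LHS](odd_double_half a).
case: (odd a) => /=; last by rewrite add0n (bin_even_odd _ _).1.
case: c => [|c]; first by rewrite !bin0.
rewrite add1n doubleS binS oddD (bin_even_odd _ _).2.
by rewrite -doubleS addbF (bin_even_odd _ _).1.
Qed.

Lemma bin_pow2 t : forall a, odd 'C(a, 2 ^ t) = odd (a %/ 2 ^ t).
Proof.
elim: t => [|t IH] a.
  by rewrite expn0 bin1 divn1.
by rewrite expnS mul2n bin_half IH -divn2 -muln2 -!divnMA mulnC.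
Qed.

Lemma key_parity n k : odd k ->
  odd 'C(k, 2 ^ n.+1) (+) odd 'C(k + 2 ^ n.+1 - 1, 2 ^ n.+1) = true.
Proof.
move=> ok; rewrite !bin_pow2.
set M := 2 ^ n.+1.
have M0 : 0 < M by rewrite expn_gt0.
have Me : ~~ odd M by rewrite /M expnS oddM.
have [u [r [hk hr]]] : exists u r, k.-1 = u * M + r /\ r < M.
  by exists (k.-1 %/ M), (k.-1 %% M); rewrite -divn_eq ltn_mod M0.
have ro : ~~ odd r.
  have : ~~ odd k.-1 by case: k ok {hk} => //= k; rewrite negbK.
  by rewrite hk oddD oddM (negbTE Me) andbF /=.
have r1 : r.+1 < M.
  rewrite ltn_neqAle hr andbT; apply/eqP => e.
  by move: Me; rewrite -e /= ro.
have -> : k = u * M + r.+1.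
  by case: k ok hk => // k _ /= ->; rewrite addnS.
rewrite divnMDl // divn_small // addn0.
have -> : u * M + r.+1 + M - 1 = u.+1 * M + r by rewrite mulSn; lia.
by rewrite divnMDl // divn_small // addn0 /=; case: (odd u).
Qed.


Local Open Scope ring_scope.

Section L.
Variable R : comNzRingType.
Notation HR := {mpoly R[2]}.

Definition L (g : 'X_{1..2} -> HR) (p : HR) : HR := \sum_(m <- msupp p) p@_m *: g m.

Lemma LwE g k p : (msize p <= k)%N -> L g p = \sum_(m : 'X_{1..2 < k}) p@_m *: g m.
Proof.
move=> lt_pk; pose I : subFinType _ := 'X_{1..2 < k}.
rewrite /L (big_mksub I) //=; first last.
+ by move=> x /msize_mdeg_lt /leq_trans /(_ lt_pk) ->.
+ by rewrite msupp_uniq.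
rewrite big_rmcond //= => m /memN_msupp_eq0 ->; by rewrite scale0r.
Qed.

Lemma L_is_linear g : linear (L g).
Proof.
move=> c p q /=; pose_big_enough l.
  rewrite (LwE _ (k := l)) //.
  rewrite (LwE _ (k := l) (p := p)) //.
  rewrite (LwE _ (k := l) (p := q)) //.
  rewrite scaler_sumr -big_split /=; apply: eq_bigr => m _.
  by rewrite linearP /= scalerDl scalerA.
by close.
Qed.
End L.

HB.instance Definition _ (R : comNzRingType) g :=
  GRing.isLinear.Build R {mpoly R[2]} {mpoly R[2]} _ (@L R g) (@L_is_linear R g).

Section G.
Variable R : comNzRingType.
Notation HR := {mpoly R[2]}.

Lemma LX g m : L g ('X_[m] : HR) = g m.
Proof. by rewrite /L msuppX big_seq1 mcoeffX eqxx scale1r. Qed.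

Definition gw1 : HR := 'X_ord0.
Definition gw2 : HR := 'X_ord_max.
Definition gwcomp (d : nat) (q : HR) : HR :=
  \sum_(m <- msupp q | wdeg m == d) q@_m *: 'X_[m].
Definition gtotalSq (q : HR) : HR :=
  comp_mpoly [tuple gw1 + gw1 ^+ 2; gw2 + gw1 * gw2 + gw2 ^+ 2] q.
Definition gSq (i : nat) (p : HR) : HR :=
  \sum_(m <- msupp p) p@_m *: gwcomp (wdeg m + i) (gtotalSq 'X_[m]).
Fixpoint gQ (n : nat) (p : HR) : HR :=
  match n with
  | 0 => gSq 1 p
  | n'.+1 => gQ n' (gSq (2 ^ n'.+1) p) - gSq (2 ^ n'.+1) (gQ n' p)
  end.
Fixpoint gwbar_pair (k : nat) : HR * HR :=
  match k with
  | 0 => (1, - gw1)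
  | k'.+1 => let: (a, b) := gwbar_pair k' in (b, - (gw1 * b + gw2 * a))
  end.
Definition gwbar (k : nat) : HR := (gwbar_pair k).1.

Lemma gSqE i : gSq i = L (fun m => gwcomp (wdeg m + i) (gtotalSq 'X_[m])).
Proof. by []. Qed.

Lemma wdegE m : wdeg m = mnmwgt m.
Proof.
rewrite /wdeg /mnmwgt !big_ord_recr big_ord0 /=.
have -> : widen_ord (leqnSn 1) ord_max = ord0 :> 'I_2 by apply: val_inj.
by rewrite add0n muln1 mulnC.
Qed.

Lemma gwcompE d q : gwcomp d q = pihomog mnmwgt d q.
Proof. by rewrite /gwcomp pihomogE; apply: eq_bigl => m; rewrite wdegE. Qed.

Definition Stup : 2.-tuple HR := [tuple mesym 2 R i.+1 | i < 2].
Definition phi (p : HR) : HR := p \mPo Stup.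
Definition xTt : 2.-tuple HR := [tuple 'X_i + 'X_i ^+ 2 | i < 2].
Definition xT (p : HR) : HR := p \mPo xTt.
Definition xSq (i : nat) : HR -> HR :=
  L (fun m => pihomog mdeg (mdeg m + i) (xT 'X_[m])).
Fixpoint xQ (n : nat) (p : HR) : HR :=
  match n with
  | 0 => xSq 1 p
  | n'.+1 => xQ n' (xSq (2 ^ n'.+1) p) - xSq (2 ^ n'.+1) (xQ n' p)
  end.

Lemma S0 : mesym 2 R 1 = 'X_ord0 + 'X_ord_max.
Proof.
rewrite mesym1E !big_ord_recr big_ord0 /= add0r.
by congr (_ + _); congr 'X__; apply/val_inj.
Qed.

Lemma S1 : mesym 2 R 2 = 'X_ord0 * 'X_ord_max.
Proof.
rewrite mesymnnE !big_ord_recr big_ord0 /= mul1r.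
by congr (_ * _); congr 'X__; apply/val_inj.
Qed.

Lemma phiXi i : phi 'X_i = mesym 2 R i.+1.
Proof. by rewrite /phi comp_mpolyXU -tnth_nth tnth_mktuple. Qed.

Lemma phiw1 : phi gw1 = 'X_ord0 + 'X_ord_max.
Proof. by rewrite /gw1 phiXi S0. Qed.

Lemma phiw2 : phi gw2 = 'X_ord0 * 'X_ord_max.
Proof. by rewrite /gw2 phiXi S1. Qed.

Lemma xTX i : xT 'X_i = 'X_i + 'X_i ^+ 2.
Proof. by rewrite /xT comp_mpolyXU -tnth_nth tnth_mktuple. Qed.

Lemma comp_comp n k l (lq : n.-tuple {mpoly R[k]})
  (lr : k.-tuple {mpoly R[l]}) p :
  (p \mPo lq) \mPo lr = p \mPo [tuple (tnth lq i \mPo lr) | i < n].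
Proof.
rewrite [p \mPo lq]comp_mpolyEX [RHS]comp_mpolyEX raddf_sum; apply: eq_bigr => m _.
rewrite /= comp_mpolyZ; congr (_ *: _).
rewrite !comp_mpolyX rmorph_prod; apply: eq_bigr => i _.
by rewrite rmorphXn tnth_mktuple.
Qed.

Hypothesis h2 : (2%:R : R) = 0.

Lemma char2 : (2%:R : HR) = 0.
Proof. by rewrite -mpolyC_nat h2 mpolyC0. Qed.

Lemma c2E (a b c : HR) : a = b + 2%:R * c -> a = b.
Proof. by move=> ->; rewrite char2 mul0r addr0. Qed.

Lemma phiD p q : phi (p + q) = phi p + phi q. Proof. exact: rmorphD. Qed.
Lemma phiM p q : phi (p * q) = phi p * phi q. Proof. exact: rmorphM. Qed.
Lemma phiXn p k : phi (p ^+ k) = phi p ^+ k. Proof. exact: rmorphXn. Qed.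
Lemma phiB p q : phi (p - q) = phi p - phi q. Proof. exact: rmorphB. Qed.
Lemma phiN p : phi (- p) = - phi p. Proof. exact: rmorphN. Qed.
Lemma phi1 : phi 1 = 1. Proof. exact: rmorph1. Qed.
Lemma phiZ c p : phi (c *: p) = c *: phi p. Proof. exact: comp_mpolyZ. Qed.
Lemma xTD p q : xT (p + q) = xT p + xT q. Proof. exact: rmorphD. Qed.
Lemma xTM p q : xT (p * q) = xT p * xT q. Proof. exact: rmorphM. Qed.
Lemma xTXn p k : xT (p ^+ k) = xT p ^+ k. Proof. exact: rmorphXn. Qed.
Lemma xTZ c p : xT (c *: p) = c *: xT p. Proof. exact: comp_mpolyZ. Qed.

Lemma phiT p : phi (gtotalSq p) = xT (phi p).
Proof.
rewrite /gtotalSq /phi /xT !comp_comp; congr (p \mPo _).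
apply: eq_from_tnth => i; rewrite !tnth_mktuple.
have [->|->] : i = ord0 \/ i = ord_max.
  by case: i => [[|[|]]] //= ?; [left|right]; apply/val_inj.
- change (phi (gw1 + gw1 ^+ 2) = xT (mesym 2 R 1)).
  rewrite S0 phiD phiXn phiw1 xTD !xTX.
  by apply: (c2E (c := 'X_ord0 * 'X_ord_max)); ring.
- change (phi (gw2 + gw1 * gw2 + gw2 ^+ 2) = xT (mesym 2 R 2)).
  rewrite S1 !phiD phiM phiXn phiw1 phiw2 xTM !xTX.
  by ring.
Qed.


Lemma phi_sum (s : seq 'X_{1..2}) (F : 'X_{1..2} -> HR) :
  phi (\sum_(m <- s) F m) = \sum_(m <- s) phi (F m).
Proof. exact: raddf_sum. Qed.
Lemma xT_sum (s : seq 'X_{1..2}) (F : 'X_{1..2} -> HR) :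
  xT (\sum_(m <- s) F m) = \sum_(m <- s) xT (F m).
Proof. exact: raddf_sum. Qed.

Lemma phi_pihomog d q : phi (pihomog mnmwgt d q) = pihomog mdeg d (phi q).
Proof. by rewrite /phi pihomog_mPo. Qed.

Lemma xSq_homog (h : HR) d i : h \is d.-homog ->
  xSq i h = pihomog mdeg (d + i) (xT h).
Proof.
move=> /dhomogP hh; rewrite [in RHS](mpolyE h) xT_sum linear_sum /xSq /L.
rewrite big_seq [RHS]big_seq; apply: eq_bigr => m hm.
by rewrite xTZ linearZ /= hh.
Qed.

Lemma phiSq i p : phi (gSq i p) = xSq i (phi p).
Proof.
rewrite /gSq phi_sum [in RHS](mpolyE p) phi_sum /xSq linear_sum.
apply: eq_bigr => m _; rewrite !phiZ linearZ /=; congr (_ *: _).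
rewrite -/(xSq i (phi 'X_[m])).
have := xSq_homog i (dhomog_XS R m); rewrite -/(phi 'X_[m]) => ->.
by rewrite gwcompE phi_pihomog phiT wdegE.
Qed.

Lemma phiQ n p : phi (gQ n p) = xQ n (phi p).
Proof.
elim: n p => [|n IH] p; first exact: phiSq.
change (phi (gQ n (gSq (2^n.+1) p) - gSq (2^n.+1) (gQ n p)) =
  xQ n (xSq (2^n.+1) (phi p)) - xSq (2^n.+1) (xQ n (phi p))).
by rewrite phiB IH phiSq phiSq IH.
Qed.

Lemma xSqMn i p k : xSq i (p *+ k) = xSq i p *+ k.
Proof. exact: raddfMn. Qed.

Lemma pihomog_Xn d k e : pihomog mdeg d ('X_k ^+ e : HR) = if e == d then 'X_k ^+ e else 0.
Proof. by rewrite mpolyXn pihomogX /= mdegMn mdeg1 mul1n. Qed.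

Lemma xSq_Xn j k e : xSq j ('X_k ^+ e : HR) = 'X_k ^+ (e + j) *+ 'C(e, j).
Proof.
have hom : ('X_k ^+ e : HR) \is e.-homog.
  by rewrite mpolyXn dhomogX /= mdegMn mdeg1 mul1n.
rewrite (xSq_homog j hom) xTXn xTX.
have -> : ('X_k + 'X_k ^+ 2 : HR) ^+ e = \sum_(t < e.+1) 'X_k ^+ (e + t) *+ 'C(e, t).
  rewrite exprDn; apply: eq_bigr => t _; congr (_ *+ _).
  rewrite -exprM -exprD; congr (_ ^+ _); have := ltn_ord t; lia.
rewrite linear_sum.
under eq_bigr => t _ do rewrite raddfMn /= pihomog_Xn eqn_add2l.
case: (ltnP j e.+1) => hj.
- rewrite (bigD1 (Ordinal hj)) //= eqxx big1 ?addr0 // => t ht.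
  have -> : (t == j :> nat) = false.
    by apply/negbTE; move: ht; apply: contra => /eqP e1; apply/eqP/val_inj.
  by rewrite mul0rn.
- rewrite big1 ?bin_small ?mulr0n // => t _.
  have -> : (t == j :> nat) = false.
    by apply/negbTE; have := ltn_ord t; move: hj; clear; lia.
  by rewrite mul0rn.
Qed.

Lemma xSqP i c p q : xSq i (c *: p + q) = c *: xSq i p + xSq i q.
Proof. exact: linearP. Qed.

Lemma xQ_is_linear n : linear (xQ n).
Proof.
elim: n => [|n IH] c p q; first exact: linearP.
change (xQ n (xSq (2^n.+1) (c *: p + q)) - xSq (2^n.+1) (xQ n (c *: p + q)) =
  c *: (xQ n (xSq (2^n.+1) p) - xSq (2^n.+1) (xQ n p)) +
  (xQ n (xSq (2^n.+1) q) - xSq (2^n.+1) (xQ n q))).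
rewrite xSqP IH IH xSqP scalerBr.
by rewrite opprD addrACA.
Qed.

Lemma xQD n p q : xQ n (p + q) = xQ n p + xQ n q.
Proof. by have := xQ_is_linear n 1 p q; rewrite !scale1r. Qed.

Lemma xQ0 n : xQ n 0 = 0.
Proof.
have h := xQD n 0 0; rewrite addr0 in h.
by apply: (addrI (xQ n 0)); rewrite -h addr0.
Qed.

Lemma xQMn n p k : xQ n (p *+ k) = xQ n p *+ k.
Proof.
elim: k => [|k IH]; first by rewrite !mulr0n xQ0.
by rewrite !mulrS xQD IH.
Qed.

Lemma mul2c (p : HR) : p *+ 2 = 0.
Proof. by rewrite -mulr_natr char2 mulr0. Qed.

Lemma oppc2 (p : HR) : - p = p.
Proof. by rewrite -[LHS]addr0 -(mul2c p) mulr2n addrA addNr add0r. Qed.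

Lemma mulrn_par (p : HR) k : p *+ k = p *+ odd k.
Proof.
rewrite -[in LHS](odd_double_half k) mulrnDr -muln2 mulrnA mul2c addr0.
by [].
Qed.

Lemma xQ_Xn n k e : xQ n ('X_k ^+ e : HR) = 'X_k ^+ (e + 2 ^ n.+1 - 1) *+ e.
Proof.
elim: n e => [|n IH] e.
  change (xSq 1 ('X_k ^+ e) = 'X_k ^+ (e + 2 ^ 1 - 1) *+ e).
  have -> : (e + 2 ^ 1 - 1 = e + 1)%N by rewrite expn1; lia.
  by rewrite xSq_Xn bin1.
change (xQ n (xSq (2 ^ n.+1) ('X_k ^+ e)) - xSq (2 ^ n.+1) (xQ n ('X_k ^+ e)) =
  'X_k ^+ (e + 2 ^ n.+2 - 1) *+ e).
rewrite xSq_Xn xQMn IH IH xSqMn xSq_Xn -!mulrnA.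
have M1 : (0 < 2 ^ n.+1)%N by rewrite expn_gt0.
have -> : (e + 2 ^ n.+1 + 2 ^ n.+1 - 1 = e + 2 ^ n.+2 - 1)%N.
  by rewrite (expnS 2 n.+1); lia.
have -> : (e + 2 ^ n.+1 - 1 + 2 ^ n.+1 = e + 2 ^ n.+2 - 1)%N.
  by rewrite (expnS 2 n.+1); lia.
rewrite oppc2 -mulrnDr mulrn_par [RHS]mulrn_par; congr (_ *+ nat_of_bool _).
have Me : odd (2 ^ n.+1) = false by rewrite oddX.
rewrite oddD !oddM oddD Me addbF.
case oe : (odd e); last by rewrite !andbF.
by rewrite !andbT key_parity.
Qed.

Definition P j : HR := 'X_ord0 ^+ j + 'X_ord_max ^+ j.

Lemma phi_wbar k : phi (gw1 * (gwbar_pair k).1) = P k.+1 /\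
  phi (gw1 * (gwbar_pair k).2) = P k.+2.
Proof.
elim: k => [|k IH].
  split; first by rewrite /= mulr1 phiw1 /P !expr1.
  rewrite /= mulrN phiN oppc2 phiM phiw1 /P.
  by apply: (c2E (c := 'X_ord0 * 'X_ord_max)); ring.
move: IH; rewrite /=; case: (gwbar_pair k) => a b /= [IH1 IH2]; split => //.
have -> : gw1 * - (gw1 * b + gw2 * a) = - (gw1 * (gw1 * b) + gw2 * (gw1 * a)) by ring.
rewrite phiN oppc2 phiD (phiM gw1 (gw1 * b)) (phiM gw2 (gw1 * a)) IH1 IH2 phiw1 phiw2 /P !exprS.
apply: (c2E (c := 'X_ord0 * 'X_ord_max *
  ('X_ord0 * 'X_ord0 ^+ k + 'X_ord_max * 'X_ord_max ^+ k))).
ring.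
Qed.

Lemma gmain n l : gQ n (gw1 * gwbar (2 * l)) = gw1 * gwbar (2 ^ n.+1 - 1 + 2 * l).
Proof.
apply: (@msym_fundamental_un 2 R).
change (phi (gQ n (gw1 * gwbar (2 * l))) = phi (gw1 * gwbar (2 ^ n.+1 - 1 + 2 * l))).
rewrite phiQ /gwbar (phi_wbar _).1 (phi_wbar _).1 /P xQD !xQ_Xn.
have o : odd (2 * l).+1 by rewrite /= oddM.
rewrite mulrn_par [X in _ + X]mulrn_par o !mulr1n.
have -> : ((2 * l).+1 + 2 ^ n.+1 - 1 = (2 ^ n.+1 - 1 + 2 * l).+1)%N.
  by have := expn_gt0 2 n.+1; lia.
by [].
Qed.
End G.

Theorem proposition5p7 (n l : nat) :
  Q n (w1 * wbar (2 * l)) = w1 * wbar (2 ^ n.+1 - 1 + 2 * l).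
Proof.
have h2 : (2%:R : 'F_2) = 0 by apply/val_inj; rewrite /= pdiv_id.
exact: (gmain h2 n l).
Qed.
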